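(* Let $X=\mathbb{CP}^2\#n\overline{\mathbb{CP}}^2$ and $k\ge1$. The set of minimal elements of $U_5=\{A\in H_2(X;\mathbb{Z}):\mathrm{ind}(A)\ge2k,\ A\cdot H>0\}$ with respect to the preorder $\ge$ is finite.
   Context: $K_0=-3H+E_1+\cdots+E_n$, $\mathrm{ind}(A):=A^2-K_0\cdot A$. With $H^2(X;\mathbb{R})\cong\mathbb{R}^{n+1}$ via $(x_0,\dots,x_n)\leftrightarrow x_0PD(H)-\sum x_iPD(E_i)$, the reduced cone $\mathcal{P}$ is: $0<x_1<x_0$ ($n=1$); $0<x_2\le x_1$, $x_1+x_2<x_0$ ($n=2$); $0<x_n\le\cdots\le x_1$, $x_1+x_2+x_3\le x_0$, $\sum x_i^2<x_0^2$ ($n\ge3$); $\mathcal{P}^{c_1>0}=\{[\omega]\in\mathcal{P}:\omega(3H-\sum E_i)>0\}$. For $A,B\in U_5$, $A\ge B$ means $\omega(A)\ge\omega(B)$ for all $[\omega]\in\mathcal{P}^{c_1>0}$; $A$ is minimal if no other $B\in U_5$ satisfies $A\ge B$. *)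

(* Defs.v *)
From HB Require Import structures.
From mathcomp Require Import all_boot all_order all_algebra.
From mathcomp Require Import reals.
Set Implicit Arguments. Unset Strict Implicit. Unset Printing Implicit Defensive.
Import Order.TTheory GRing.Theory Num.Theory.
Local Open Scope ring_scope.

(* X = CP^2 # n \bar{CP^2}.  A class A in H_2(X;Z) is written A = a H - sum_i b_i E_i,
   encoded as the pair (a, b) with b : {ffun 'I_n -> int}; E_{i+1} <-> index i. *)
Definition H2 (n : nat) := (int * {ffun 'I_n -> int})%type.

Definition classH (n : nat) : H2 n := (1, [ffun => 0]).

(* K_0 = -3H + E_1 + ... + E_n, i.e. a = -3, b_i = -1. *)
Definition K0 (n : nat) : H2 n := (-3, [ffun => -1]).

(* intersection form: H.H = 1, E_i.E_j = -delta_ij, H.E_i = 0 *)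
Definition dotH2 (n : nat) (A B : H2 n) : int :=
  A.1 * B.1 - \sum_(i < n) A.2 i * B.2 i.

Definition ind (n : nat) (A : H2 n) : int := dotH2 A A - dotH2 (K0 n) A.

Definition U5 (n k : nat) (A : H2 n) : Prop :=
  (2 * k)%:Z <= ind A /\ 0 < dotH2 A (classH n).

(* Cohomology class x_0 PD(H) - sum x_i PD(E_i), encoded as (x_0, x) with
   x : 'I_n -> R (x_{i+1} <-> x i).  Its value on A = aH - sum b_i E_i is
   x_0 a - sum x_i b_i. *)
Definition pairing (R : realType) (n : nat) (x0 : R) (x : 'I_n -> R) (A : H2 n) : R :=
  x0 * A.1%:~R - \sum_(i < n) x i * (A.2 i)%:~R.

(* 0-based accessor: xk x k = x_{k+1} (0 outside the range) *)
Definition xk (R : realType) (n : nat) (x : 'I_n -> R) (k : nat) : R :=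
  if insub k is Some i then x i else 0.

Definition reduced_cone (R : realType) (n : nat) (x0 : R) (x : 'I_n -> R) : Prop :=
  match n with
  | 0 => False
  | 1 => 0 < xk x 0 /\ xk x 0 < x0
  | 2 => 0 < xk x 1 /\ xk x 1 <= xk x 0 /\ xk x 0 + xk x 1 < x0
  | _ => (forall i : 'I_n, 0 < x i)
         /\ (forall i j : 'I_n, (i <= j)%N -> x j <= x i)
         /\ xk x 0 + xk x 1 + xk x 2 <= x0
         /\ \sum_(i < n) x i ^+ 2 < x0 ^+ 2
  end.

Definition c1class (n : nat) : H2 n := (3, [ffun => 1]).

Definition cone_c1pos (R : realType) (n : nat) (x0 : R) (x : 'I_n -> R) : Prop :=
  reduced_cone x0 x /\ 0 < pairing x0 x (c1class n).

Definition geq_cls (R : realType) (n : nat) (A B : H2 n) : Prop :=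
  forall (x0 : R) (x : 'I_n -> R), cone_c1pos x0 x -> pairing x0 x B <= pairing x0 x A.

Definition minimal_U5 (R : realType) (n k : nat) (A : H2 n) : Prop :=
  U5 k A /\ forall B : H2 n, U5 k B -> B <> A -> ~ geq_cls R A B.

(* Main.v *)
Require Import Defs.
From HB Require Import structures.
From mathcomp Require Import all_boot all_order all_algebra.
From mathcomp Require Import reals.
From mathcomp Require Import zify ring lra.
Set Implicit Arguments. Unset Strict Implicit. Unset Printing Implicit Defensive.
Import Order.TTheory GRing.Theory Num.Theory.
Local Open Scope ring_scope.

Definition subc n (A D : H2 n) : H2 n := (A.1 - D.1, [ffun j => A.2 j - D.2 j]).

Definition phi (b : int) : int := b ^+ 2 + b.

Lemma pairing_sub (R : realType) n x0 (x : 'I_n -> R) (A D : H2 n) :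
  pairing x0 x (subc A D) = pairing x0 x A - pairing x0 x D.
Proof.
rewrite /pairing /subc /=.
rewrite (eq_bigr (fun i => x i * (A.2 i)%:~R - x i * (D.2 i)%:~R)); last first.
  by move=> i _; rewrite ffunE rmorphB /= mulrBr.
rewrite sumrB rmorphB /= mulrBr; ring.
Qed.

Lemma ind_expand n (A : H2 n) : ind A = A.1 ^+ 2 + 3 * A.1 - \sum_j phi (A.2 j).
Proof.
rewrite /ind /dotH2 /K0 /phi /=.
have -> : \sum_(i < n) [ffun=> -1] i * A.2 i = - \sum_i A.2 i.
  by rewrite -sumrN; apply: eq_bigr => i _; rewrite ffunE mulN1r.
rewrite big_split /=.
ring.
Qed.

Lemma dot_classH n (B : H2 n) : dotH2 B (classH n) = B.1.
Proof. by rewrite /dotH2 /= mulr1 big1 ?subr0 // => i _; rewrite ffunE mulr0. Qed.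

Lemma min_move (R : realType) n k (A D : H2 n) : minimal_U5 R k A ->
  (forall (x0 : R) (x : 'I_n -> R), cone_c1pos x0 x -> 0 <= pairing x0 x D) ->
  subc A D <> A -> 0 < A.1 - D.1 -> ind (subc A D) < (2 * k)%:Z.
Proof.
move=> [UA Hmin] Hd Hne Hpos; rewrite ltNge; apply/negP => Hind.
apply: (Hmin (subc A D)) => //; first by split => //; rewrite dot_classH.
move=> x0 x Hc; rewrite pairing_sub; have := Hd x0 x Hc; lra.
Qed.

Lemma sum1pt (V : zmodType) n (G : 'I_n -> V) i : (forall l, l != i -> G l = 0) ->
  \sum_l G l = G i.
Proof. by move=> H; rewrite (bigD1 i) //= big1 ?addr0 // => l /H. Qed.

Lemma sum2pt (V : zmodType) n (G : 'I_n -> V) i j : i != j ->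
  (forall l, l != i -> l != j -> G l = 0) -> \sum_l G l = G i + G j.
Proof.
move=> Hij H; rewrite (bigD1 i) //= (bigD1 j) //= 1?eq_sym // big1 ?addr0 ?addrA //.
by move=> l /andP[Hl1 Hl2]; apply: H.
Qed.

Lemma ind_diff n (A D : H2 n) : ind (subc A D) =
  (A.1 - D.1) ^+ 2 + 3 * (A.1 - D.1) - \sum_j phi (A.2 j)
   - \sum_j (phi (A.2 j - D.2 j) - phi (A.2 j)).
Proof.
rewrite ind_expand /= sumrB.
rewrite (eq_bigr (fun j => phi (A.2 j - D.2 j))); last by move=> j _; rewrite ffunE.
ring.
Qed.

Lemma sq_le_sum n (b : 'I_n -> int) : (forall i, 0 <= b i) ->
  \sum_i b i ^+ 2 <= (\sum_i b i) ^+ 2.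
Proof.
move=> Hb; rewrite expr2 mulr_suml; apply: ler_sum => i _.
rewrite expr2 ler_wpM2l //.
by rewrite (bigD1 i) //= lerDl sumr_ge0.
Qed.

Lemma le_sum_one n (b : 'I_n -> int) i : (forall i, 0 <= b i) -> b i <= \sum_i b i.
Proof. by move=> Hb; rewrite (bigD1 i) //= lerDl sumr_ge0. Qed.

Lemma xk_val (R : realType) n (x : 'I_n -> R) (i : 'I_n) : xk x i = x i.
Proof. by rewrite /xk; case: insubP => [j _ /val_inj -> //|]; rewrite ltn_ord. Qed.

Lemma b_nonneg (R : realType) n k (A : H2 n) : minimal_U5 R k A ->
  (forall (x0 : R) (x : 'I_n -> R), cone_c1pos x0 x -> forall i, 0 < x i) ->
  forall i, 0 <= A.2 i.
Proof.
move=> hm hx i; rewrite leNgt; apply/negP => hneg.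
pose D : H2 n := (0, [ffun j => if j == i then -1 else 0]).
have ha : 0 < A.1 by move: hm => [[_]]; rewrite dot_classH.
have H := @min_move R n k A D hm.
have hind := hm.1.1.
have {}H : ind (subc A D) < (2 * k)%:Z.
  apply: H.
  - move=> x0 x hc; rewrite /pairing /= mulr0 sub0r (sum1pt (i:=i)); last first.
      by move=> l hl; rewrite ffunE (negbTE hl) mulr0.
    rewrite ffunE eqxx (_ : (-1)%:~R = -1 :> R) ?mulrN1 ?opprK; [exact: ltW (hx _ _ hc i) | by rewrite rmorphN rmorph1].
  - move/(congr1 (fun B : H2 n => B.2 i)); rewrite /subc /= !ffunE eqxx; lia.
  - by rewrite /= subr0.
move: H; rewrite ind_diff [X in _ - X](sum1pt (i:=i)); last first.
  by move=> l hl; rewrite /D /= ffunE (negbTE hl) subr0 subrr.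
rewrite /D /= ffunE eqxx.
have -> : phi (A.2 i - -1) - phi (A.2 i) = 2 * A.2 i + 2 by rewrite /phi; ring.
move: hind; rewrite ind_expand => hind.
rewrite /= in hind; rewrite subr0; lia.
Qed.

Lemma b_sorted (R : realType) n k (A : H2 n) : minimal_U5 R k A ->
  (forall (x0 : R) (x : 'I_n -> R), cone_c1pos x0 x ->
      forall i j : 'I_n, (i <= j)%N -> x j <= x i) ->
  forall i j : 'I_n, (i <= j)%N -> A.2 j <= A.2 i.
Proof.
move=> hm hx i j hij; rewrite leNgt; apply/negP => hlt.
have hne : i != j by apply/negP => /eqP e; move: hlt; rewrite e ltxx.
have hji : (j == i) = false by rewrite eq_sym (negbTE hne).
pose D : H2 n := (0, [ffun l => (if l == j then 1 else 0) - (if l == i then 1 else 0)]).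
have ha : 0 < A.1 by move: hm => [[_]]; rewrite dot_classH.
have H := @min_move R n k A D hm.
have hind := hm.1.1.
have {}H : ind (subc A D) < (2 * k)%:Z.
  apply: H.
  - move=> x0 x hc; rewrite /pairing /= mulr0 sub0r (sum2pt (i:=i) (j:=j)) //; last first.
      by move=> l hl1 hl2; rewrite ffunE (negbTE hl1) (negbTE hl2) subrr mulr0.
    rewrite !ffunE eqxx (negbTE hne) hji sub0r subr0 (_ : (-1)%:~R = -1 :> R);
      last by rewrite rmorphN rmorph1.
    rewrite eqxx mulrN1 rmorph1 mulr1.
    have := hx _ _ hc i j hij; lra.
  - move/(congr1 (fun B : H2 n => B.2 i)); rewrite /subc /= !ffunE eqxx (negbTE hne); lia.
  - by rewrite /= subr0.
move: H; rewrite ind_diff [X in _ - X](sum2pt (i:=i) (j:=j)) //; last first.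
  by move=> l hl1 hl2; rewrite /D /= ffunE (negbTE hl1) (negbTE hl2) subrr subr0 subrr.
rewrite /D /= !ffunE eqxx (negbTE hne) hji.
have -> : phi (A.2 i - (0 - 1)) - phi (A.2 i) = 2 * A.2 i + 2 by rewrite /phi; ring.
rewrite eqxx; have -> : phi (A.2 j - (1 - 0)) - phi (A.2 j) = - 2 * A.2 j by rewrite /phi; ring.
move: hind; rewrite ind_expand => hind.
rewrite /= in hind; rewrite subr0; lia.
Qed.

Lemma ind_sums n (A : H2 n) :
  ind A = A.1^+2 + 3*A.1 - (\sum_j A.2 j ^+ 2 + \sum_j A.2 j).
Proof. by rewrite ind_expand /phi big_split. Qed.

Lemma ind_const n (A : H2 n) d : ind (subc A (d, [ffun=> 1])) =
  (A.1 - d)^+2 + 3*(A.1 - d) - (\sum_j A.2 j ^+ 2 - \sum_j A.2 j).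
Proof.
rewrite ind_expand /subc /= (eq_bigr (fun j => A.2 j ^+ 2 - A.2 j)) ?sumrB //.
by move=> j _; rewrite !ffunE /phi; ring.
Qed.

Lemma pair_const (R : realType) n (x0 : R) (x : 'I_n -> R) d :
  pairing x0 x (d, [ffun=> 1]) = x0 * d%:~R - \sum_i x i.
Proof.
rewrite /pairing /=; congr (_ - _); apply: eq_bigr => i _.
by rewrite ffunE rmorph1 mulr1.
Qed.

Lemma move_const (R : realType) n k (A : H2 n) (d : int) : minimal_U5 R k A ->
  (forall (x0 : R) (x : 'I_n -> R), cone_c1pos x0 x -> 0 <= x0 * d%:~R - \sum_i x i) ->
  d != 0 -> 0 < A.1 - d ->
  A.1^+2 - 2 * A.1 * d + d ^+ 2 + 3*(A.1 - d) - (\sum_j A.2 j ^+ 2 - \sum_j A.2 j) < (2 * k)%:Z.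
Proof.
move=> hm hd hd0 ha.
have := @min_move R n k A (d, [ffun=> 1]) hm.
rewrite ind_const.
have -> : (A.1 - d)^+2 = A.1^+2 - 2 * A.1 * d + d ^+ 2 by ring.
apply => //.
- by move=> x0 x hc; rewrite pair_const; apply: hd.
- by move/(congr1 fst) => /= /eqP; rewrite subr_eq addrC -subr_eq subrr eq_sym (negbTE hd0).
Qed.

Lemma split3 (V : zmodType) m (G : 'I_m.+3 -> V) : \sum_j G j =
  G ord0 + G (lift ord0 ord0) + G (lift ord0 (lift ord0 ord0)) +
  \sum_(j < m) G (lift ord0 (lift ord0 (lift ord0 j))).
Proof. by rewrite !big_ord_recl !addrA. Qed.

Lemma c1_pos (R : realType) n (x0 : R) (x : 'I_n -> R) : cone_c1pos x0 x ->
  0 <= x0 * (3%:Z)%:~R - \sum_i x i.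
Proof. by move=> [_ h]; move: h; rewrite /c1class pair_const => /ltW. Qed.

Lemma cone_n1 (R : realType) (x0 : R) (x : 'I_1 -> R) : cone_c1pos x0 x ->
  (forall i, 0 < x i) /\ 0 <= x0 * (1%:Z)%:~R - \sum_i x i.
Proof.
move=> [[h1 h2] _]; have e : xk x 0 = x ord0 := xk_val x ord0.
rewrite e in h1 h2; split; first by move=> i; rewrite (ord1 i).
rewrite big_ord1 rmorph1 mulr1; lra.
Qed.

Lemma cone_n2 (R : realType) (x0 : R) (x : 'I_2 -> R) : cone_c1pos x0 x ->
  (forall i, 0 < x i) /\ 0 <= x0 * (1%:Z)%:~R - \sum_i x i.
Proof.
move=> [[h1 [h2 h3]] _].
have e0 : xk x 0 = x ord0 := xk_val x ord0.
have e1 : xk x 1 = x (lift ord0 ord0) := xk_val x (lift ord0 ord0).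
rewrite e0 e1 in h1 h2 h3; split.
  move=> [[|[|j]] Hj].
  - by rewrite (_ : Ordinal Hj = ord0) //; [lra | apply: val_inj].
  - by rewrite (_ : Ordinal Hj = lift ord0 ord0) //; apply: val_inj.
  - by [].
rewrite big_ord_recl big_ord1 rmorph1 mulr1; lra.
Qed.

Lemma cone_n3 (R : realType) m (x0 : R) (x : 'I_m.+3 -> R) : cone_c1pos x0 x ->
  [/\ (forall i, 0 < x i), (forall i j : 'I_m.+3, (i <= j)%N -> x j <= x i) &
   x ord0 + x (lift ord0 ord0) + x (lift ord0 (lift ord0 ord0)) <= x0].
Proof.
move=> [[h1 [h2 [h3 h4]]] _].
have e0 : xk x 0 = x ord0 := xk_val x ord0.
have e1 : xk x 1 = x (lift ord0 ord0) := xk_val x (lift ord0 ord0).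
have e2 : xk x 2 = x (lift ord0 (lift ord0 ord0)) := xk_val x (lift ord0 (lift ord0 ord0)).
by rewrite e0 e1 e2 in h3.
Qed.
Lemma core12 (a S Q k : int) : 0 <= S -> Q <= S ^+ 2 -> 0 <= k -> 0 < a ->
  2*k <= a^+2 + 3*a - (Q + S) -> (1 < a -> (a-1)^+2 + 3*(a-1) - (Q - S) < 2*k) -> a <= k + 1.
Proof.
move=> hS hQ hk ha he h1.
have [Ha|Ha] := lerP a 1; first lia.
have {}h1 := h1 Ha.
have e1 : a^+2 + a - 2 - Q + S <= 2*k - 1.
  move: h1; have -> : (a-1)^+2 + 3*(a-1) = a^+2 + a - 2 by ring. lia.
have hSa : S <= a by lia.
have : S^+2 - S <= a^+2 - a.
  rewrite -subr_ge0.
  have -> : a^+2 - a - (S^+2 - S) = (a - S) * (a + S - 1) by ring.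
  apply: mulr_ge0; lia.
lia.
Qed.
Lemma bbound (a b X : int) : 0 <= a -> 0 <= b -> b^+2 + b <= X -> X <= a^+2 + 3*a -> b <= a + 1.
Proof.
move=> ha hb h1 h2; rewrite leNgt; apply/negP => hc.
have : (a+2)^+2 <= b^+2.
  rewrite -subr_ge0; have -> : b^+2 - (a+2)^+2 = (b - a - 2) * (b + a + 2) by ring.
  apply: mulr_ge0; lia.
have -> : (a+2)^+2 = a^+2 + 4*a + 4 by ring.
lia.
Qed.
Lemma core3 (a b0 b1 b2 T Qt k m : int) :
 0 <= b2 -> b2 <= b1 -> b1 <= b0 -> 0 <= T -> T <= m * b2 -> 0 <= Qt -> Qt <= b2 * T -> 0 <= k -> 0 <= m ->
 2*k <= a^+2 + 3*a - (b0^+2+b0+(b1^+2+b1)+(b2^+2+b2)+(Qt+T)) ->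
 (1 < a -> (a-1)^+2 + 3*(a-1) - ((b0-1)^+2+(b0-1) + ((b1-1)^+2+(b1-1)) + ((b2-1)^+2+(b2-1)) + (Qt + T)) < 2*k) ->
 (3 < a -> (a-3)^+2 + 3*(a-3) - ((b0-1)^+2+(b0-1) + ((b1-1)^+2+(b1-1)) + ((b2-1)^+2+(b2-1)) + (Qt - T)) < 2*k) ->
 a <= 2*k + 4 + (1 + 2*k) * (2 * k * m).
Proof.
move=> h0 h1 h2 hT0 hT hQ0 hQ hk hm he h3 hc.
have hX : 0 <= (1 + 2*k) * (2 * k * m).
  by apply: mulr_ge0; [apply: addr_ge0 => //; apply: mulr_ge0 | apply: mulr_ge0 => //; apply: mulr_ge0].
have [Ha|Ha] := lerP a (2*k+4).
  by apply: le_trans Ha _; rewrite lerDl.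
have {}h3 := h3 ltac:(clear -Ha hk; lia). have {}hc := hc ltac:(clear -Ha hk; lia).
set s := b0 + b1 + b2 in h3 hc he *.
set Q3 := b0^+2 + b1^+2 + b2^+2.
have e1 : 2*k <= a^+2 + 3*a - Q3 - s - Qt - T.
  by rewrite /Q3 /s; clear -he; lra.
have e3 : Q3 - s + Qt + T >= a^+2 + a - 2*k - 1.
  move: h3; rewrite /Q3 /s; clear.
  have -> : (a-1)^+2 + 3*(a-1) = a^+2 + a - 2 by ring.
  have -> : (b0-1)^+2+(b0-1) = b0^+2 - b0 by ring.
  have -> : (b1-1)^+2+(b1-1) = b1^+2 - b1 by ring.
  have -> : (b2-1)^+2+(b2-1) = b2^+2 - b2 by ring.
  lia.
have ec : a^+2 - 3*a - (Q3 - s + Qt - T) <= 2*k - 1.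
  move: hc; rewrite /Q3 /s; clear.
  have -> : (a-3)^+2 + 3*(a-3) = a^+2 - 3*a by ring.
  have -> : (b0-1)^+2+(b0-1) = b0^+2 - b0 by ring.
  have -> : (b1-1)^+2+(b1-1) = b1^+2 - b1 by ring.
  have -> : (b2-1)^+2+(b2-1) = b2^+2 - b2 by ring.
  lia.
have hsT : s + T <= 3 * a - 1 by clear -e1 ec; lia.
have hs : s <= a by clear -e1 e3; lia.
set P := b0*b1+b0*b2+b1*b2.
have hQ3 : Q3 = s^+2 - 2*P by rewrite /Q3 /s /P; ring.
have key : (a^+2 - s^+2) + 2*P + a + s <= T + T * b2 + 2*k + 1.
  have : Qt <= T * b2 by rewrite mulrC.
  move: e3; rewrite hQ3; clear -hQ; lia.
have hP : b2 * s <= P.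
  rewrite /P /s.
  have : b2 * b2 <= b0 * b1 by apply: ler_pM => //; clear -h0 h1 h2; lia.
  have -> : b2 * (b0 + b1 + b2) = b2 * b0 + b2 * b1 + b2 * b2 by ring.
  rewrite [b2 * b0]mulrC [b2 * b1]mulrC; clear; lia.
have h3b : 3 * b2 <= s by rewrite /s; clear -h0 h1 h2; lia.
have hTb : T * b2 <= (3 * a - 1 - s) * b2 by apply: ler_wpM2r => //; clear -hsT; lia.
have [hlt|hge] := ltrP s a.
  exfalso.
  have hu : (a + s - 3*b2 - 2) <= (a - s) * (a + s - 3*b2 - 2).
    rewrite -[X in X <= _]mul1r; apply: ler_wpM2r; clear -hlt h3b Ha hk h0; lia.
  have id : a^+2 - s^+2 + 2*(b2*s) + a + s - ((3*a - 1 - s) + (3*a - 1 - s) * b2 + 2*k + 1)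
     = (a - s) * (a + s - 3*b2 - 2) + b2 - 2*k by ring.
  clear -hu id key hP hTb hsT h3b Ha hk h0 hlt; lia.
have hse : s = a by clear -hs hge; lia.
have hb2 : b2 <= 2 * k.
  have e1' : (3 * a - 1 - s) * b2 = 2 * (a * b2) - b2 by rewrite hse; ring.
  have e2' : b2 * s = a * b2 by rewrite hse mulrC.
  have e3' : s^+2 = a^+2 by rewrite hse.
  clear -hP hTb hsT hse key e1' e2' e3'; clearbody s P; lia.
have hT2 : T <= 2 * k * m.
  apply: le_trans hT _; rewrite mulrC; apply: ler_wpM2r => //.
have hTT : T * b2 <= (2 * k * m) * (2 * k).
  by apply: ler_pM.
have -> : (1 + 2 * k) * (2 * k * m) = 2 * k * m + (2 * k * m) * (2 * k) by ring.
have : 0 <= b2 * s by rewrite mulr_ge0 //; clear -h3b h0; lia.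
have e3' : s^+2 = a^+2 by rewrite hse.
have : 0 <= T * b2 by apply: mulr_ge0.
clear -hP hTT hT2 key e3' hse hT0 hk; clearbody s P; lia.
Qed.

Lemma bound12 (R : realType) n k (A : H2 n) : minimal_U5 R k A ->
  (forall (x0 : R) (x : 'I_n -> R), cone_c1pos x0 x ->
     (forall i, 0 < x i) /\ 0 <= x0 * (1%:Z)%:~R - \sum_i x i) ->
  A.1 <= k%:Z + 1.
Proof.
move=> hm hc.
have hb := b_nonneg hm (fun x0 x h => (hc x0 x h).1).
have ha : 0 < A.1 by move: hm => [[_]]; rewrite dot_classH.
have hind := hm.1.1; rewrite ind_sums in hind.
have hS : 0 <= \sum_i A.2 i by apply: sumr_ge0.
have hQ := sq_le_sum hb.
have hk : 0 <= k%:Z by [].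
have he : 2 * k%:Z <= A.1^+2 + 3*A.1 - (\sum_i A.2 i ^+ 2 + \sum_i A.2 i) by lia.
apply: (core12 hS hQ hk ha he) => h1.
have := move_const (d := 1) hm (fun x0 x h => (hc x0 x h).2) isT ltac:(lia).
have -> : A.1 ^+ 2 - 2 * A.1 * 1 + 1 ^+ 2 = (A.1 - 1)^+2 by ring.
lia.
Qed.




Lemma bound3 (R : realType) m k (A : H2 m.+3) : minimal_U5 R k A ->
  A.1 <= 2 * k%:Z + 4 + (1 + 2 * k%:Z) * (2 * k%:Z * m%:Z).
Proof.
move=> hm.
have hb := b_nonneg hm (fun x0 x h => let: And3 a _ _ := cone_n3 h in a).
have hs := b_sorted hm (fun x0 x h => let: And3 _ a _ := cone_n3 h in a).
have ha : 0 < A.1 by move: hm => [[_]]; rewrite dot_classH.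
have hind := hm.1.1; rewrite ind_sums !split3 in hind.
set b0 := A.2 ord0 in hind *.
set b1 := A.2 (lift ord0 ord0) in hind *.
set b2 := A.2 (lift ord0 (lift ord0 ord0)) in hind *.
set T := \sum_(j < m) A.2 (lift ord0 (lift ord0 (lift ord0 j))) in hind *.
set Qt := \sum_(j < m) A.2 (lift ord0 (lift ord0 (lift ord0 j))) ^+ 2 in hind *.
have hb2 : 0 <= b2 by apply: hb.
have h12 : b2 <= b1 by apply: hs; rewrite !lift0.
have h01 : b1 <= b0 by apply: hs; rewrite !lift0.
have htail : forall j : 'I_m, 0 <= A.2 (lift ord0 (lift ord0 (lift ord0 j))) <= b2.
  by move=> j; rewrite hb /=; apply: hs; rewrite !lift0.
have hT0 : 0 <= T by apply: sumr_ge0 => j _; case/andP: (htail j).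
have hT : T <= m%:Z * b2.
  rewrite /T; apply: le_trans (_ : \sum_(j < m) b2 <= _).
    by apply: ler_sum => j _; case/andP: (htail j).
  by rewrite sumr_const card_ord -mulr_natl natz.
have hQ0 : 0 <= Qt by apply: sumr_ge0 => j _; apply: sqr_ge0.
have hQ : Qt <= b2 * T.
  rewrite /T mulr_sumr; apply: ler_sum => j _; case/andP: (htail j) => h1 h2.
  by rewrite expr2 ler_wpM2r.
have hk : 0 <= k%:Z by [].
have hm0 : 0 <= m%:Z by [].
have he : 2 * k%:Z <= A.1^+2 + 3*A.1 - (b0^+2+b0+(b1^+2+b1)+(b2^+2+b2)+(Qt+T)) by lia.
apply: (core3 hb2 h12 h01 hT0 hT hQ0 hQ hk hm0 he).
- move=> h1.
  pose D : H2 m.+3 := (1, [ffun j : 'I_m.+3 => if (j < 3)%N then 1 else 0]).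
  have H := @min_move R _ k A D hm.
  have {}H : ind (subc A D) < (2*k)%:Z.
    apply: H.
    + move=> x0 x hc; case: (cone_n3 hc) => _ _ h.
      rewrite /pairing /= split3 !ffunE big1 => [|j _]; last first.
        by rewrite ffunE !lift0 !ltnS ltn0 mulr0.
      rewrite !lift0 /= !rmorph1 !mulr1 addr0.
      lra.
    + by move/(congr1 fst) => /= /eqP; rewrite subr_eq addrC -subr_eq subrr.
    + by rewrite /= subr_gt0.
  move: H; rewrite ind_expand split3 /subc /= !ffunE.
  rewrite (eq_bigr (fun j => A.2 (lift ord0 (lift ord0 (lift ord0 j))) ^+ 2 +
                           A.2 (lift ord0 (lift ord0 (lift ord0 j))))); last first.
    by move=> j _; rewrite !ffunE !lift0 !ltnS ltn0 subr0.
  rewrite big_split /= ?lift0 /= /phi -/b0 -/b1 -/b2 -/T -/Qt.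
  move=> HH; clear -HH; lia.
- move=> h3.
  have := move_const (d := 3) hm (@c1_pos R _) isT ltac:(lia).
  rewrite !split3 -/b0 -/b1 -/b2 -/T -/Qt.
  have -> : A.1 ^+ 2 - 2 * A.1 * 3 + 3 ^+ 2 + 3 * (A.1 - 3) = (A.1 - 3)^+2 + 3 * (A.1 - 3) by ring.
  have -> : (b0-1)^+2+(b0-1) + ((b1-1)^+2+(b1-1)) + ((b2-1)^+2+(b2-1)) + (Qt - T)
          = b0 ^+ 2 + b1 ^+ 2 + b2 ^+ 2 + Qt - (b0 + b1 + b2 + T) by ring.
  by [].
Qed.



Lemma finite_box n (N : nat) : exists s : seq (H2 n), forall A : H2 n,
  0 <= A.1 < N%:Z -> (forall i, 0 <= A.2 i < N%:Z) -> A \in s.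
Proof.
pose F (p : 'I_N * {ffun 'I_n -> 'I_N}) : H2 n :=
  ((p.1 : nat)%:Z, [ffun i => ((p.2 i : nat))%:Z]).
exists (codom F) => -[a b] /= ha hb.
have h1 : (absz a < N)%N by lia.
have h2 : forall i, (absz (b i) < N)%N by move=> i; have := hb i; lia.
rewrite (_ : (a, b) = F (Ordinal h1, [ffun i => Ordinal (h2 i)])); first exact: codom_f.
rewrite /F /=; congr pair; first by lia.
by apply/ffunP => i; rewrite !ffunE /=; have := hb i; lia.
Qed.

Lemma cone_pos (R : realType) n (x0 : R) (x : 'I_n -> R) : cone_c1pos x0 x ->
  forall i, 0 < x i.
Proof.
case: n x => [|[|[|m]]] x h i.
- by case: i.
- by case: (cone_n1 h) => H _; apply: H.
- by case: (cone_n2 h) => H _; apply: H.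
- by case: (cone_n3 h) => H _ _; apply: H.
Qed.

Definition Mb (n k : nat) : int :=
  2 * k%:Z + 4 + (1 + 2 * k%:Z) * (2 * k%:Z * n%:Z).

Lemma Mb_ge n k : 2 * k%:Z + 4 <= Mb n k.
Proof.
rewrite /Mb lerDl; apply: mulr_ge0; first by apply: addr_ge0.
by apply: mulr_ge0.
Qed.

Lemma bound_a (R : realType) n k (A : H2 n) : (1 <= n)%N -> minimal_U5 R k A ->
  A.1 <= Mb n k.
Proof.
have hk : 0 <= k%:Z by [].
case: n A => [|[|[|m]]] A // _ hm.
- apply: le_trans (bound12 hm (fun x0 x h => cone_n1 h)) _.
  apply: le_trans (Mb_ge _ _); clear -hk; lia.
- apply: le_trans (bound12 hm (fun x0 x h => cone_n2 h)) _.
  apply: le_trans (Mb_ge _ _); clear -hk; lia.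
- apply: le_trans (bound3 hm) _.
  rewrite /Mb lerD2l; apply: ler_wpM2l; first by clear -hk; lia.
  by apply: ler_wpM2l; clear -hk; lia.
Qed.

Lemma bound_b (R : realType) n k (A : H2 n) : minimal_U5 R k A ->
  forall i, 0 <= A.2 i <= A.1 + 1.
Proof.
move=> hm i.
have hb := b_nonneg hm (@cone_pos R n).
have ha : 0 < A.1 by move: hm => [[_]]; rewrite dot_classH.
have hind := hm.1.1; rewrite ind_expand in hind.
rewrite hb /=.
apply: (@bbound _ _ (\sum_j phi (A.2 j))).
- exact: ltW.
- exact: hb.
- rewrite (bigD1 i) //= lerDl; apply: sumr_ge0 => j _.
  by rewrite /phi; apply: addr_ge0; [apply: sqr_ge0 | apply: hb].
- clear -hind; lia.
Qed.

Theorem proposition4p6 (R : realType) (n k : nat) :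
  (1 <= n)%N -> (1 <= k)%N ->
  exists s : seq (H2 n), forall A : H2 n, minimal_U5 R k A -> A \in s.
Proof.
move=> hn hk.
have [s hs] := finite_box n (absz (Mb n k) + 2).
exists s => A hm; apply: hs.
- have ha : 0 < A.1 by move: hm => [[_]]; rewrite dot_classH.
  have := bound_a hn hm; have := Mb_ge n k; clear -ha; lia.
- move=> i; have := bound_b hm i; have := bound_a hn hm; have := Mb_ge n k; clear; lia.
Qed.
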